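(* Let $0<q\leq 1$, let $D\in\mathbb{R}^{n\times d}$ be a frame with frame bounds $0<\mathcal{L}\leq\mathcal{U}<\infty$, $\kappa=\mathcal{U}/\mathcal{L}$, let $A\in\mathbb{R}^{m\times n}$, and let $s<a$ be positive integers. Assume $A$ satisfies the $(D^{\dagger},q)$-RIP of order $s+a$ (with constants $\delta_a$ and $\delta_{s+a}<1$), and let $\Delta=\frac{1+\delta_a}{1-\delta_{s+a}}$. Let $h\in\mathbb{R}^n$ be arbitrary with associated index sets $T=T_0,T_1,\dots$ and $T_{01}=T_0\cup T_1$ as in the context. Then $$\|D_{T_{01}}^*h\|_2^{q}\leq 2^{-q/2}\left(1+\sqrt{1+4\kappa^{-2}\Delta^{-2/q}}\right)^{q/2}\kappa^q\Delta\, a^{q/2-1}\left(\|D_{T^c}^*h\|_q^q+\frac{\mathcal{L}^{q/2}a^{1-q/2}\|Ah\|_q^q}{1+\delta_a}\right).$$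
   Context: $D$ is a frame with frame bounds $\mathcal{L},\mathcal{U}$ if $\mathcal{L}\|f\|_2^2\leq\|D^*f\|_2^2\leq\mathcal{U}\|f\|_2^2$ for all $f\in\mathbb{R}^n$; $D^{\dagger}=(DD^* )^{-1}D$. $A$ obeys the $(D^\dagger,q)$-RIP of order $k$ with constant $\delta\in[0,1)$ if $(1-\delta)\|D^\dagger v\|_2^q\leq\|AD^\dagger v\|_q^q\leq(1+\delta)\|D^\dagger v\|_2^q$ for all $v\in\mathbb{R}^d$ with at most $k$ nonzero entries; $\delta_k$ is the smallest such $\delta$. Index sets: write $D^*h=(x_1,\dots,x_d)^T$, reorder so that $|x_1|\geq\cdots\geq|x_d|$; $T=T_0=\{1,\dots,s\}$, $T_1=\{s+1,\dots,s+a\}$, $T_i=\{s+(i-1)a+1,\dots,s+ia\}$ for $i\geq2$ (last possibly smaller), $T_{01}=T_0\cup T_1$, $T^c=[d]\setminus T$. For $S\subset[d]$, $D_S^*h$ denotes $D^*h$ restricted to $S$ (entries outside $S$ set to zero). *)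

(* Defs.v *)
From HB Require Import structures.
From mathcomp Require Import all_boot all_order all_algebra.
From mathcomp Require Import perm reals exp.
Set Implicit Arguments. Unset Strict Implicit. Unset Printing Implicit Defensive.
Import Order.TTheory GRing.Theory Num.Theory.
Local Open Scope ring_scope.

Section Defs.
Variable R : realType.

Definition norm2 {k} (x : 'cV[R]_k) : R := Num.sqrt (\sum_i (x i 0) ^+ 2).
Definition normqq {k} (q : R) (x : 'cV[R]_k) : R := \sum_i `|x i 0| `^ q.

(* D_S^* x : x restricted to S (entries outside S set to zero) *)
Definition restr {k} (S : {set 'I_k}) (x : 'cV[R]_k) : 'cV[R]_k :=
  \col_i (if i \in S then x i 0 else 0).

Definition sparse {k} (K : nat) (v : 'cV[R]_k) : Prop :=
  (#|[set i | v i ord0 != 0%R]| <= K)%N.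

Definition frame {n d} (D : 'M[R]_(n, d)) (L U : R) : Prop :=
  forall f : 'cV[R]_n,
    L * norm2 f ^+ 2 <= norm2 (D^T *m f) ^+ 2 /\
    norm2 (D^T *m f) ^+ 2 <= U * norm2 f ^+ 2.

Definition pinvD {n d} (D : 'M[R]_(n, d)) : 'M[R]_(n, d) :=
  invmx (D *m D^T) *m D.

Definition DqRIP {m n d} (A : 'M[R]_(m, n)) (D : 'M[R]_(n, d)) (q : R)
    (k : nat) (delta : R) : Prop :=
  0 <= delta /\ delta < 1 /\
  forall v : 'cV[R]_d, sparse k v ->
    (1 - delta) * norm2 (pinvD D *m v) `^ q <= normqq q (A *m (pinvD D *m v)) /\
    normqq q (A *m (pinvD D *m v)) <= (1 + delta) * norm2 (pinvD D *m v) `^ q.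

Definition RIP_const {m n d} (A : 'M[R]_(m, n)) (D : 'M[R]_(n, d)) (q : R)
    (k : nat) (delta : R) : Prop :=
  DqRIP A D q k delta /\
  forall delta', DqRIP A D q k delta' -> delta <= delta'.

Definition nonincr_order {k} (x : 'cV[R]_k) (sigma : {perm 'I_k}) : Prop :=
  forall i j : 'I_k, (i <= j)%N -> `|x (sigma j) 0| <= `|x (sigma i) 0|.

End Defs.

(* T_0 = indices of the s largest entries, T_1 = the next a entries (0-based) *)
Definition T0 {k} (sigma : {perm 'I_k}) (s : nat) : {set 'I_k} :=
  [set sigma i | i : 'I_k & (i < s)%N].
Definition T1 {k} (sigma : {perm 'I_k}) (s a : nat) : {set 'I_k} :=
  [set sigma i | i : 'I_k & (s <= i < s + a)%N].

(* Main.v *)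
Require Import Defs.
From HB Require Import structures.
From mathcomp Require Import all_boot all_order all_algebra.
From mathcomp Require Import perm reals exp.
From mathcomp Require Import zify ring lra.
Set Implicit Arguments. Unset Strict Implicit. Unset Printing Implicit Defensive.
Import Order.TTheory GRing.Theory Num.Theory.
Local Open Scope ring_scope.
Lemma powR_subadd (R : realType) (p x y : R) : 0 < p -> p <= 1 -> 0 <= x -> 0 <= y ->
  (x + y) `^ p <= x `^ p + y `^ p.
Proof.
move=> p0 p1 x0 y0.
have [->|xn0] := eqVneq x 0; first by rewrite add0r powR0 ?gt_eqF // add0r.
have [->|yn0] := eqVneq y 0; first by rewrite addr0 powR0 ?gt_eqF // addr0.
have xp : 0 < x by rewrite lt_def xn0.
have yp : 0 < y by rewrite lt_def yn0.
set z := x + y; have zp : 0 < z by rewrite /z addr_gt0.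
have ex : x = z * (x / z) by rewrite mulrC divfK // gt_eqF.
have ey : y = z * (y / z) by rewrite mulrC divfK // gt_eqF.
have h1 : x / z <= (x / z) `^ p.
  apply: ger1_powR => //; rewrite divr_gt0 //= ler_pdivrMr // mul1r /z; lra.
have h2 : y / z <= (y / z) `^ p.
  apply: ger1_powR => //; rewrite divr_gt0 //= ler_pdivrMr // mul1r /z; lra.
rewrite [in X in _ <= X `^ _ + _]ex [in X in _ <= _ + X `^ _]ey (powRM _ (ltW zp) (divr_ge0 x0 (ltW zp))) (powRM _ (ltW zp) (divr_ge0 y0 (ltW zp))).
rewrite -mulrDr -[X in X <= _]mulr1; apply: ler_wpM2l; first exact: powR_ge0.
have : x / z + y / z = 1 by rewrite -mulrDl divff // gt_eqF.
lra.
Qed.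

Lemma powR_sum_subadd (R : realType) (I : Type) (r : seq I) (P : pred I) (F : I -> R) (p : R) :
  0 < p -> p <= 1 -> (forall i, 0 <= F i) ->
  (\sum_(i <- r | P i) F i) `^ p <= \sum_(i <- r | P i) (F i) `^ p.
Proof.
move=> p0 p1 F0; elim: r => [|i r IH].
  by rewrite !big_nil powR0 ?gt_eqF.
rewrite !big_cons; case: (P i) => //.
apply: le_trans (powR_subadd p0 p1 (F0 i) _) _; first by apply: sumr_ge0.
by rewrite lerD2l.
Qed.

Lemma powR_le_inv (R : realType) (p x y : R) : 0 < p -> 0 <= x -> 0 <= y ->
  x `^ p <= y `^ p -> x <= y.
Proof.
move=> p0 x0 y0 h; rewrite leNgt; apply/negP => yx.
have := gt0_ltr_powR p0 y0 x0 yx; rewrite ltNge h //.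
Qed.

Lemma powR_ler (R : realType) (p x y : R) : 0 <= p -> 0 <= x -> x <= y -> x `^ p <= y `^ p.
Proof. move=> p0 x0 xy; apply: ge0_ler_powR => //; rewrite nnegrE //; lra. Qed.
Definition dotv (R : realType) k (u v : 'cV[R]_k) : R := \sum_i u i 0 * v i 0.

Lemma sumsq_ge0 (R : realType) k (v : 'cV[R]_k) : 0 <= \sum_i v i 0 ^+ 2.
Proof. by apply: sumr_ge0 => i _; rewrite sqr_ge0. Qed.

Lemma norm2_ge0 (R : realType) k (v : 'cV[R]_k) : 0 <= norm2 v.
Proof. exact: sqrtr_ge0. Qed.

Lemma norm2_sq (R : realType) k (v : 'cV[R]_k) : norm2 v ^+ 2 = \sum_i v i 0 ^+ 2.
Proof. by rewrite /norm2 sqr_sqrtr // sumsq_ge0. Qed.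

Lemma norm2_sq_dot (R : realType) k (v : 'cV[R]_k) : norm2 v ^+ 2 = dotv v v.
Proof. by rewrite norm2_sq; apply: eq_bigr => i _; rewrite expr2. Qed.

Lemma sumsq_eq0 (R : realType) k (v : 'cV[R]_k) : \sum_i v i 0 ^+ 2 = 0 -> forall i, v i 0 = 0.
Proof.
move=> /eqP; rewrite psumr_eq0 => [/allP H i|i _]; last by rewrite sqr_ge0.
by have := H i (mem_index_enum i); rewrite /= sqrf_eq0 => /eqP.
Qed.

Lemma dotv_mx (R : realType) m k (M : 'M[R]_(m, k)) (u : 'cV[R]_m) (v : 'cV[R]_k) :
  dotv (M^T *m u) v = dotv u (M *m v).
Proof.
rewrite /dotv; under eq_bigr => i _ do rewrite mxE big_distrl /=.
rewrite exchange_big /=; apply: eq_bigr => j _; rewrite mxE big_distrr /=.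
by apply: eq_bigr => i _; rewrite mxE; ring.
Qed.

Lemma dotvC (R : realType) k (u v : 'cV[R]_k) : dotv u v = dotv v u.
Proof. by apply: eq_bigr => i _; rewrite mulrC. Qed.

Lemma CS_sq (R : realType) k (u v : 'cV[R]_k) :
  dotv u v ^+ 2 <= (\sum_i u i 0 ^+ 2) * (\sum_i v i 0 ^+ 2).
Proof.
set C := dotv u v; set Au := \sum_i u i 0 ^+ 2; set B := \sum_i v i 0 ^+ 2.
have B0 : 0 <= B by apply: sumsq_ge0.
have [Be|Bn] := eqVneq B 0.
  have v0 := sumsq_eq0 Be.
  have -> : C = 0 by rewrite /C /dotv big1 // => i _; rewrite v0 mulr0.
  by rewrite Be expr0n /= mulr0.
have Bp : 0 < B by rewrite lt_def Bn.
have E : \sum_i (B * u i 0 - C * v i 0) ^+ 2 = B * (B * Au - C ^+ 2).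
  transitivity (\sum_i (B ^+ 2 * u i 0 ^+ 2 - (2 * B * C) * (u i 0 * v i 0) + C ^+ 2 * v i 0 ^+ 2)).
    by apply: eq_bigr => i _; ring.
  rewrite big_split /= sumrB -!mulr_sumr /= -/Au -/B -/C; rewrite /C /dotv; ring.
have : 0 <= B * (B * Au - C ^+ 2) by rewrite -E; apply: sumr_ge0 => i _; rewrite sqr_ge0.
rewrite pmulr_rge0 // subr_ge0 mulrC //.
Qed.

Lemma CS (R : realType) k (u v : 'cV[R]_k) : dotv u v <= norm2 u * norm2 v.
Proof.
apply: le_trans (ler_norm _) _.
rewrite /norm2 -sqrtrM ?sumsq_ge0 // -sqrtr_sqr.
by rewrite ler_sqrt ?CS_sq // mulr_ge0 // sumsq_ge0.
Qed.

Lemma normqq_ge0 (R : realType) k q (v : 'cV[R]_k) : 0 <= normqq q v.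
Proof. by apply: sumr_ge0 => i _; apply: powR_ge0. Qed.

Lemma normqqD (R : realType) k q (u v : 'cV[R]_k) : 0 < q -> q <= 1 ->
  normqq q (u + v) <= normqq q u + normqq q v.
Proof.
move=> q0 q1; rewrite /normqq -big_split /=; apply: ler_sum => i _.
rewrite mxE; apply: le_trans (powR_subadd q0 q1 (normr_ge0 _) (normr_ge0 _)).
by apply: powR_ler; [lra| |apply: ler_normD].
Qed.

Lemma normqqN (R : realType) k q (v : 'cV[R]_k) : normqq q (- v) = normqq q v.
Proof. by apply: eq_bigr => i _; rewrite mxE normrN. Qed.

Lemma normqq0 (R : realType) k q : 0 < q -> normqq q (0 : 'cV[R]_k) = 0.
Proof. by move=> q0; rewrite /normqq big1 // => i _; rewrite mxE normr0 powR0 // gt_eqF. Qed.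

Lemma normqq_sum (R : realType) k q N (V : 'I_N -> 'cV[R]_k) : 0 < q -> q <= 1 ->
  normqq q (\sum_(j < N) V j) <= \sum_(j < N) normqq q (V j).
Proof.
move=> q0 q1; apply: (big_ind2 (fun a b => normqq q a <= b)).
- by rewrite normqq0.
- by move=> a1 b1 a2 b2 h1 h2; apply: le_trans (normqqD _ _ q0 q1) _; apply: lerD.
- by [].
Qed.

Lemma frame_unit (R : realType) n d (D : 'M[R]_(n, d)) L U : 0 < L -> frame D L U ->
  D *m D^T \in unitmx.
Proof.
move=> L0 fr; rewrite unitmxE unitfE; apply/negP => /det0P[v vn0 vM].
set f := v^T.
have Mf : D *m (D^T *m f) = 0.
  have sym : (D *m D^T)^T = D *m D^T by rewrite trmx_mul trmxK.
  by rewrite mulmxA /f -sym -trmx_mul vM trmx0.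
have : norm2 (D^T *m f) ^+ 2 = 0.
  by rewrite norm2_sq_dot dotv_mx Mf /dotv big1 // => i _; rewrite !mxE mulr0.
move=> h0; have [h1 _] := fr f; rewrite h0 in h1.
have : norm2 f ^+ 2 = 0.
  apply/eqP; rewrite eq_le sqr_ge0 andbT.
  by rewrite -(pmulr_rle0 _ L0).
rewrite norm2_sq => /sumsq_eq0 fz; move/negP: vn0; apply.
apply/eqP/matrixP => i j; rewrite (ord1 i) mxE.
by have := fz j; rewrite /f mxE => ->.
Qed.

Lemma DDtDp (R : realType) n d (D : 'M[R]_(n, d)) L U : 0 < L -> frame D L U ->
  D *m D^T *m pinvD D = D.
Proof.
move=> L0 fr; rewrite /pinvD mulmxA mulmxV ?mul1mx //; exact: frame_unit L0 fr.
Qed.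

Lemma pinvDx (R : realType) n d (D : 'M[R]_(n, d)) L U (h : 'cV[R]_n) : 0 < L -> frame D L U ->
  pinvD D *m (D^T *m h) = h.
Proof.
move=> L0 fr; rewrite /pinvD -mulmxA (mulmxA D) mulmxA mulVmx ?mul1mx //; exact: frame_unit L0 fr.
Qed.

Lemma key_dot (R : realType) n d (D : 'M[R]_(n, d)) L U (h : 'cV[R]_n) (v : 'cV[R]_d) :
  0 < L -> frame D L U ->
  dotv (D^T *m h) v = dotv (D^T *m (pinvD D *m v)) (D^T *m h).
Proof.
move=> L0 fr.
have E : D *m v = D *m (D^T *m (pinvD D *m v)).
  by rewrite (mulmxA D) (mulmxA (D *m D^T)) (DDtDp L0 fr).
by rewrite dotv_mx E -dotv_mx dotvC.
Qed.

Lemma pinv_bound (R : realType) n d (D : 'M[R]_(n, d)) L U (v : 'cV[R]_d) :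
  0 < L -> frame D L U ->
  L * norm2 (pinvD D *m v) ^+ 2 <= norm2 v ^+ 2.
Proof.
move=> L0 fr; set g := pinvD D *m v.
have [h1 _] := fr g; apply: le_trans h1 _.
have E : norm2 (D^T *m g) ^+ 2 = dotv (D^T *m g) v.
  have E : D *m (D^T *m g) = D *m v.
    by rewrite /g (mulmxA D) (mulmxA (D *m D^T)) (DDtDp L0 fr).
  by rewrite norm2_sq_dot dotv_mx E -dotv_mx.
have cs := CS (D^T *m g) v; rewrite -E in cs.
have n0 := norm2_ge0 (D^T *m g); have n1 := norm2_ge0 v.
have : norm2 (D^T *m g) <= norm2 v.
  have [z|nz] := eqVneq (norm2 (D^T *m g)) 0; first by rewrite z.
  have p : 0 < norm2 (D^T *m g) by rewrite lt_def nz.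
  by rewrite expr2 in cs; rewrite -(ler_pM2l p).
move=> le; rewrite !expr2; apply: ler_pM => //.
Qed.

Definition rk d (sigma : {perm 'I_d}) (i : 'I_d) : nat := (sigma^-1)%g i.
Definition Pblk d (sigma : {perm 'I_d}) (s a j : nat) : {set 'I_d} :=
  [set i | (s + j * a <= rk sigma i < s + j.+1 * a)%N].

Lemma rk_perm d (sigma : {perm 'I_d}) k : rk sigma (sigma k) = k.
Proof. by rewrite /rk permK. Qed.

Lemma memT0 d (sigma : {perm 'I_d}) s i : (i \in T0 sigma s) = (rk sigma i < s)%N.
Proof.
apply/imsetP/idP => [[k hk ->]|h]; first by rewrite rk_perm; rewrite inE in hk.
by exists ((sigma^-1)%g i); rewrite ?inE // permKV.
Qed.

Lemma memT1 d (sigma : {perm 'I_d}) s a i : (i \in T1 sigma s a) = (s <= rk sigma i < s + a)%N.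
Proof.
apply/imsetP/idP => [[k hk ->]|h]; first by rewrite rk_perm; rewrite inE in hk.
by exists ((sigma^-1)%g i); rewrite ?inE // permKV.
Qed.

Lemma card_rng k lo hi : #|[set i : 'I_k | (lo <= i < hi)%N]| = count (fun n => n < k)%N (iota lo (hi - lo)).
Proof.
rewrite -(size_pmap_sub 'I_k) -(card_uniqP _); last by apply: pmap_sub_uniq; apply: iota_uniq.
apply: eq_card => i; rewrite inE mem_pmap_sub mem_iota.
have [h|h] := leqP lo hi; first by rewrite subnKC.
apply/idP/idP => /andP[h1 h2]; last by lia.
by lia.
Qed.

Lemma card_pre d (sigma : {perm 'I_d}) lo hi :
  #|[set i | (lo <= rk sigma i < hi)%N]| = #|[set k : 'I_d | (lo <= k < hi)%N]|.
Proof.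
rewrite -(card_imset _ (@perm_inj _ ((sigma^-1)%g))); apply: eq_card => k.
apply/imsetP/idP => [[i hi' ->]|h]; first by rewrite inE in hi'; rewrite inE.
exists (sigma k); [by rewrite inE rk_perm; rewrite inE in h | by rewrite permK].
Qed.

Lemma card_pre_le d (sigma : {perm 'I_d}) lo hi :
  (#|[set i | (lo <= rk sigma i < hi)%N]| <= hi - lo)%N.
Proof. by rewrite card_pre card_rng (leq_trans (count_size _ _)) // size_iota. Qed.

Lemma card_rng_full k lo hi : (hi <= k)%N -> #|[set i : 'I_k | (lo <= i < hi)%N]| = (hi - lo)%N.
Proof.
move=> hk; rewrite card_rng (eq_in_count (a2 := predT)) ?count_predT ?size_iota //.
move=> n; rewrite mem_iota => /andP[h1 h2]; have -> : (n < k)%N by lia.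
by [].
Qed.

Lemma sparse_restr (R : realType) k K (S : {set 'I_k}) (x : 'cV[R]_k) :
  (#|S| <= K)%N -> sparse K (restr S x).
Proof.
move=> h; apply: leq_trans h; apply: subset_leq_card; apply/subsetP => i.
by rewrite !inE mxE; case: (i \in S) => //; rewrite eqxx.
Qed.

Lemma sum_ind (R : realType) d (f : R -> R) (b : bool) (e : nat) (v : R) : f 0 = 0 ->
  \sum_(j < d) f (if b && (val j == e) then v else 0) = f (if b && (e < d)%N then v else 0).
Proof.
move=> f0; case: b => /=; last by rewrite big1 // => j _; rewrite f0.
have [ed|ed] := ltnP e d.
  rewrite (bigD1 (Ordinal ed)) //= eqxx big1 ?addr0 // => j hj.
  rewrite (_ : (val j == e) = false) ?f0 //; apply/negbTE; apply: contra hj => /eqP hje.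
  by apply/eqP; apply: val_inj.
rewrite f0 big1 // => j _; case: eqP => [hje|]; last by rewrite f0.
by have := ltn_ord j; rewrite hje ltnNge ed.
Qed.

Lemma sq_powR (R : realType) (q y : R) : 0 <= y -> (y ^+ 2) `^ (q / 2) = y `^ q.
Proof.
move=> y0; rewrite -powR_mulrn // -powRrM; congr (_ `^ _).
by rewrite mulrC -mulrA mulVf ?mulr1 // pnatr_eq0.
Qed.

Lemma powR_invK (R : realType) (q y : R) : q != 0 -> 0 <= y -> (y `^ q^-1) `^ q = y.
Proof. by move=> q0 y0; rewrite -powRrM mulVf // powRr1. Qed.

Lemma powR_Nmul (R : realType) (r y : R) : 0 < y -> y `^ (- r) * y `^ r = 1.
Proof. by move=> y0; rewrite powRN mulVf // gt_eqF // powR_gt0. Qed.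

Lemma powR_invx (R : realType) (p y : R) : 0 < y -> (y^-1) `^ p = y `^ (- p).
Proof.
move=> y0; rewrite powRN; apply: (@mulIf _ (y `^ p)); first by rewrite gt_eqF // powR_gt0.
by rewrite -powRM ?invr_ge0 ?(ltW y0) // mulVf ?gt_eqF // powR1 mulVf // gt_eqF // powR_gt0.
Qed.

Lemma final_ineq (R : realType) (q kappa Delta V X : R) :
  0 < q -> 1 <= kappa -> 0 < Delta -> 0 <= V -> 0 <= X ->
  X ^+ 4 <= (X ^+ 2 + V `^ q^-1 ^+ 2) * kappa * Delta `^ q^-1 ^+ 2 * V `^ q^-1 ^+ 2 ->
  X `^ q <= 2 `^ (- (q / 2)) * (1 + Num.sqrt (1 + 4 * kappa ^- 2 * Delta `^ (- (2 / q)))) `^ (q / 2)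
     * kappa `^ q * Delta * V.
Proof.
move=> q0 k1 D0 V0 X0 H.
set W := V `^ q^-1 in H; set Dl := Delta `^ q^-1 in H.
have W0 : 0 <= W by apply: powR_ge0.
have Dl0 : 0 < Dl by apply: powR_gt0.
have k0 : 0 < kappa by lra.
have eDl : Delta `^ (- (2 / q)) = (Dl ^+ 2)^-1.
  by rewrite powRN -powR_mulrn ?(ltW Dl0) // -powRrM mulrC.
rewrite eDl.
set b := kappa ^- 2 * (Dl ^+ 2)^-1.
have b0 : 0 <= b.
  by apply: mulr_ge0; rewrite invr_ge0 exprn_ge0 // ltW.
set M := kappa ^+ 2 * Dl ^+ 2 * W ^+ 2.
have M0 : 0 <= M by apply: mulr_ge0; [apply: mulr_ge0|]; apply: sqr_ge0.
have Mb : M ^+ 2 * b = kappa ^+ 2 * Dl ^+ 2 * W ^+ 4.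
  rewrite /M /b; field; rewrite ?gt_eqF ?expf_gt0 //.
have H2 : X ^+ 4 <= M * X ^+ 2 + M ^+ 2 * b.
  apply: le_trans H _; rewrite Mb /M.
  have kk : kappa <= kappa ^+ 2 by rewrite expr2 ler_peMr //; lra.
  have P1 : 0 <= Dl ^+ 2 * W ^+ 2 * X ^+ 2.
    by apply: mulr_ge0; [apply: mulr_ge0|]; apply: sqr_ge0.
  have P2 : 0 <= Dl ^+ 2 * W ^+ 4.
    by apply: mulr_ge0; [apply: sqr_ge0|apply: exprn_ge0].
  have -> : (X ^+ 2 + W ^+ 2) * kappa * Dl ^+ 2 * W ^+ 2 =
     kappa * (Dl ^+ 2 * W ^+ 2 * X ^+ 2) + kappa * (Dl ^+ 2 * W ^+ 4) by ring.
  have -> : kappa ^+ 2 * Dl ^+ 2 * W ^+ 2 * X ^+ 2 + kappa ^+ 2 * Dl ^+ 2 * W ^+ 4 =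
     kappa ^+ 2 * (Dl ^+ 2 * W ^+ 2 * X ^+ 2) + kappa ^+ 2 * (Dl ^+ 2 * W ^+ 4) by ring.
  by apply: lerD; apply: ler_wpM2r.
have e4b : 4 * kappa ^- 2 * (Dl ^+ 2)^-1 = 4 * b by rewrite /b mulrA.
set r := Num.sqrt (1 + 4 * kappa ^- 2 * (Dl ^+ 2)^-1).
have r0 : 0 <= r by apply: sqrtr_ge0.
have r2 : r ^+ 2 = 1 + 4 * b by rewrite sqr_sqrtr e4b //; lra.
have X2 : X ^+ 2 <= M * ((1 + r) / 2).
  set Z := X ^+ 2 in H2 *.
  have Z0 : 0 <= Z by apply: sqr_ge0.
  have e4 : X ^+ 4 = Z ^+ 2 by rewrite /Z -exprM.
  rewrite e4 in H2.
  have E : (Z - M * (1 + r) / 2) * (Z - M * (1 - r) / 2) = Z ^+ 2 - M * Z - M ^+ 2 * b.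
    have -> : M ^+ 2 * b = M ^+ 2 * ((r ^+ 2 - 1) / 4) by rewrite r2; field.
    by field.
  rewrite leNgt; apply/negP => hlt.
  have h1 : 0 < Z - M * (1 + r) / 2 by lra.
  have h2 : 0 < Z - M * (1 - r) / 2.
    have : 0 <= M * r by apply: mulr_ge0.
    have -> : M * (1 - r) / 2 = M * (1 + r) / 2 - M * r by field.
    move=> ?.
    lra.
  have := mulr_gt0 h1 h2; rewrite E; lra.
have e1 : X `^ q = (X ^+ 2) `^ (q / 2) by rewrite sq_powR.
rewrite e1; apply: le_trans (powR_ler (p := q / 2) _ (sqr_ge0 X) X2) _.
  by apply: divr_ge0; lra.
have e2 : M `^ (q / 2) = kappa `^ q * Delta * V.
  rewrite /M (powRM _ (mulr_ge0 (sqr_ge0 kappa) (sqr_ge0 Dl)) (sqr_ge0 W)) (powRM _ (sqr_ge0 _) (sqr_ge0 _)).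
  rewrite !sq_powR ?(ltW k0) ?(ltW Dl0) //.
  by rewrite /Dl /W !powR_invK ?gt_eqF // ltW.
have e3 : ((1 + r) / 2) `^ (q / 2) = 2 `^ (- (q / 2)) * (1 + r) `^ (q / 2).
  have h1r : 0 <= 1 + r by lra.
  have h2 : 0 <= (2 : R)^-1 by rewrite invr_ge0.
  by rewrite (powRM _ h1r h2) powR_invx // mulrC.
have h12 : 0 <= (1 + r) / 2 by apply: divr_ge0; lra.
rewrite (powRM _ M0 h12) e2 e3.
by rewrite le_eqVlt; apply/orP; left; apply/eqP; ring.
Qed.

Lemma blk (s a j k : nat) : (0 < a)%N ->
  (s + j*a <= k < s + j.+1*a)%N = (s <= k)%N && (j == (k - s) %/ a)%N.
Proof.
move=> a0; have [sk|ks] := leqP s k; last first.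
  by apply/negbTE; apply/negP => /andP[h _]; lia.
have e : (j == (k - s) %/ a)%N = (j <= (k-s) %/a)%N && ((k-s) %/ a < j.+1)%N.
  by rewrite eqn_leq ltnS andbC.
rewrite /= e leq_divRL // ltn_divLR //; apply/idP/idP => /andP[h1 h2]; apply/andP; split; lia.
Qed.

Lemma blocks_entry (R : realType) d (sigma : {perm 'I_d}) s a (x : 'cV[R]_d) (i : 'I_d)
  (f : R -> R) : f 0 = 0 -> (0 < a)%N ->
  \sum_(j < d) f (restr (Pblk sigma s a j.+1) x i 0)
   = f (if (s + a <= rk sigma i)%N then x i 0 else 0).
Proof.
move=> f0 a0; set k := rk sigma i.
have kd : (k < d)%N by apply: ltn_ord.
have dk : ((k - s) %/ a <= k - s)%N by apply: leq_div.
transitivity (\sum_(j < d) f (if (s + a <= k)%N && (val j == (k - s) %/ a - 1)%N then x i 0 else 0)).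
  apply: eq_bigr => j _; rewrite mxE inE; congr (f (if _ then _ else _)).
  rewrite blk //; have [h|h] := leqP (s + a) k.
    have e1 : (1 <= (k - s) %/ a)%N by rewrite leq_divRL //; lia.
    move: e1; set e := ((k - s) %/ a)%N => e1.
    have -> : (s <= k)%N by lia.
    rewrite /=; apply/eqP/eqP => /= H; lia.
  by rewrite (divn_small (_ : k - s < a)%N) //; lia.
rewrite sum_ind //; congr (f (if _ then _ else _)); apply/andb_idr => _; lia.
Qed.

Lemma blocks_entry0 (R : realType) d (sigma : {perm 'I_d}) s a (x : 'cV[R]_d) (i : 'I_d)
  (f : R -> R) : f 0 = 0 -> (0 < a)%N ->
  \sum_(j < d) f (restr (Pblk sigma s a j) x i 0)
   = f (if (s <= rk sigma i)%N then x i 0 else 0).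
Proof.
move=> f0 a0; set k := rk sigma i.
have kd : (k < d)%N by apply: ltn_ord.
have dk : ((k - s) %/ a <= k - s)%N by apply: leq_div.
transitivity (\sum_(j < d) f (if (s <= k)%N && (val j == (k - s) %/ a)%N then x i 0 else 0)).
  by apply: eq_bigr => j _; rewrite mxE inE blk.
rewrite sum_ind //; congr (f (if _ then _ else _)); apply/andb_idr => _; lia.
Qed.

Lemma sum_restr (R : realType) k (f : R -> R) (S : {set 'I_k}) (x : 'cV[R]_k) : f 0 = 0 ->
  \sum_i f (restr S x i 0) = \sum_(i in S) f (x i 0).
Proof. by move=> f0; rewrite [RHS]big_mkcond; apply: eq_bigr => i _; rewrite mxE; case: ifP. Qed.

Lemma block_bound (R : realType) d (sigma : {perm 'I_d}) s a (x : 'cV[R]_d) (q : R) j :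
  0 < q -> q <= 1 -> (0 < a)%N -> nonincr_order x sigma ->
  norm2 (restr (Pblk sigma s a j.+1) x) `^ q
    <= a%:R `^ (q / 2 - 1) * normqq q (restr (Pblk sigma s a j) x).
Proof.
move=> q0 q1 a0 ord.
set B := Pblk sigma s a j.+1; set P := Pblk sigma s a j; set p := normqq q (restr P x).
have ap : 0 < a%:R :> R by rewrite ltr0n.
have p0 : 0 <= p by apply: normqq_ge0.
have pE : p = \sum_(i in P) `|x i 0| `^ q.
  by rewrite /p /normqq (sum_restr (f := fun y => `|y| `^ q)) // normr0 powR0 // gt_eqF.
set mu := (p / a%:R) `^ q^-1.
have mu0 : 0 <= mu by apply: powR_ge0.
have muq : mu `^ q = p / a%:R by rewrite powR_invK ?gt_eqF // divr_ge0 // ltW.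
have bnd : forall i, i \in B -> `|x i 0| <= mu.
  move=> i; rewrite inE => /andP[hi1 hi2].
  have kd : (rk sigma i < d)%N by apply: ltn_ord.
  have cP : #|P| = a.
    rewrite /P /Pblk card_pre card_rng_full; rewrite mulSn in hi1 *; lia.
  have : a%:R * `|x i 0| `^ q <= p.
    rewrite pE -cP mulr_natl -sumr_const; apply: ler_sum => k; rewrite inE => /andP[_ hk].
    apply: powR_ler; [lra|exact: normr_ge0|].
    have hle : ((sigma^-1)%g k <= (sigma^-1)%g i)%N.
      by move: hk hi1; rewrite /rk mulSn; lia.
    by have := ord _ _ hle; rewrite !permKV.
  move=> h; apply: (powR_le_inv q0 (normr_ge0 _) mu0); rewrite muq.
  by rewrite ler_pdivlMr // mulrC.
have cB : (#|B| <= a)%N.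
  apply: leq_trans (card_pre_le _ _ _) _; rewrite !mulSn; lia.
have h2 : norm2 (restr B x) ^+ 2 <= a%:R * mu ^+ 2.
  rewrite norm2_sq (sum_restr (f := fun y => y ^+ 2)) ?expr0n //.
  apply: (@le_trans _ _ (\sum_(i in B) mu ^+ 2)).
    apply: ler_sum => i hi; rewrite -real_normK ?num_real //.
    by apply: lerXn2r; rewrite ?nnegrE ?normr_ge0 ?bnd.
  rewrite sumr_const -[_ *+ #|B|]mulr_natl; apply: ler_wpM2r; first exact: sqr_ge0.
  by rewrite ler_nat.
have e1 : norm2 (restr B x) `^ q = (norm2 (restr B x) ^+ 2) `^ (q / 2) by rewrite sq_powR // norm2_ge0.
rewrite e1; apply: (le_trans (powR_ler (p := q / 2) _ (sqr_ge0 _) h2)); first by lra.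
rewrite powRM ?(ltW ap) ?sqr_ge0 // sq_powR // muq.
rewrite powRB; last by apply/implyP => _; rewrite gt_eqF.
rewrite powRr1 ?(ltW ap) //.
rewrite le_eqVlt; apply/orP; left; apply/eqP; field; rewrite gt_eqF //.
Qed.

Lemma pinv_powR (R : realType) n d (D : 'M[R]_(n, d)) L U (v : 'cV[R]_d) (q : R) :
  0 < q -> 0 < L -> frame D L U ->
  norm2 (pinvD D *m v) `^ q <= L `^ (- (q / 2)) * norm2 v `^ q.
Proof.
move=> q0 L0 fr; have h := pinv_bound v L0 fr.
rewrite -(sq_powR q (norm2_ge0 (pinvD D *m v))) -(sq_powR q (norm2_ge0 v)).
have h' : norm2 (pinvD D *m v) ^+ 2 <= L^-1 * norm2 v ^+ 2.
  by rewrite mulrC ler_pdivlMr // mulrC.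
apply: le_trans (powR_ler (p := q / 2) _ (sqr_ge0 _) h') _; first by lra.
by rewrite powRM ?invr_ge0 ?sqr_ge0 ?(ltW L0) // powR_invx.
Qed.

Lemma memT01 d (sigma : {perm 'I_d}) s a i :
  (i \in T0 sigma s :|: T1 sigma s a) = (rk sigma i < s + a)%N.
Proof.
rewrite inE memT0 memT1; case: (ltnP (rk sigma i) s) => h /=; last by [].
by apply/esym; apply: ltn_addr.
Qed.

Unset Implicit Arguments.

Theorem lemma2p7 (R : realType) (m n d s a : nat) (q L U : R)
    (D : 'M[R]_(n, d)) (A : 'M[R]_(m, n)) (delta_a delta_sa : R)
    (h : 'cV[R]_n) (sigma : {perm 'I_d}) :
  0 < q -> q <= 1 ->
  0 < L -> L <= U -> frame D L U ->
  (0 < s)%N -> (s < a)%N ->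
  RIP_const A D q a delta_a ->
  RIP_const A D q (s + a) delta_sa ->
  nonincr_order (D^T *m h) sigma ->
  let kappa := U / L in
  let Delta := (1 + delta_a) / (1 - delta_sa) in
  let x := D^T *m h in
  let T := T0 sigma s in
  let T01 := T :|: T1 sigma s a in
  norm2 (restr T01 x) `^ q <=
    2 `^ (- (q / 2)) * (1 + Num.sqrt (1 + 4 * kappa ^- 2 * Delta `^ (- (2 / q)))) `^ (q / 2)
    * kappa `^ q * Delta * a%:R `^ (q / 2 - 1)
    * (normqq q (restr (~: T) x)
       + L `^ (q / 2) * a%:R `^ (1 - q / 2) * normqq q (A *m h) / (1 + delta_a)).
Proof.
move=> q0 q1 L0 LU fr s0 sa ripa rips ord; cbv zeta.
set kappa := U / L; set Delta := (1 + delta_a) / (1 - delta_sa); set x := D^T *m h.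
set T := T0 sigma s; set T01 := T :|: T1 sigma s a.
case: ripa => [[dA0 [dA1 ripA]] _]; case: rips => [[dS0 [dS1 ripS]] _].
have dA1p : 0 <= 1 + delta_a by lra.
have dA1s : 0 < 1 + delta_a by lra.
have dS1p : 0 < 1 - delta_sa by lra.
have p2 : 0 < q / 2 by apply: divr_gt0.
have p21 : q / 2 <= 1 by lra.
have a0 : (0 < a)%N by exact: (leq_ltn_trans (leq0n s) sa).
have ap : 0 < a%:R :> R by rewrite ltr0n.
have xdef : x = D^T *m h by [].
rewrite -/x in ord; clearbody x.
have hT01 : forall i, (i \in T01) = (rk sigma i < s + a)%N by move=> i; apply: memT01.
have hT : forall i, (i \in T) = (rk sigma i < s)%N by move=> i; apply: memT0.
clearbody T01 T.
set u := restr T01 x.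
set g := pinvD D *m u.
set P := Pblk sigma s a.
set wv := \sum_(j < d) restr (P j.+1) x.
have wvE : forall i, wv i 0 = if (s + a <= rk sigma i)%N then x i 0 else 0.
  by move=> i; rewrite /wv summxE (@blocks_entry _ _ sigma s a x i id).
have uE : forall i, u i 0 = if (rk sigma i < s + a)%N then x i 0 else 0.
  by move=> i; rewrite mxE hT01.
have xdec : x = u + wv.
  apply/matrixP => i k; rewrite (ord1 k) mxE uE wvE.
  by case: ltnP => _; rewrite ?addr0 ?add0r.
have hx : h = pinvD D *m x by rewrite xdef (pinvDx _ L0 fr).
have AhE : A *m g = A *m h - \sum_(j < d) A *m (pinvD D *m restr (P j.+1) x).
  by rewrite hx {1}xdec !mulmxDr /wv !mulmx_sumr addrK.
have spu : sparse (s + a) u.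
  apply: sparse_restr.
  have -> : T01 = [set i | (0 <= rk sigma i < s + a)%N] by apply/setP => i; rewrite inE hT01.
  by apply: leq_trans (card_pre_le _ _ _) _; rewrite subn0.
have spj : forall j, sparse a (restr (P j.+1) x).
  move=> j; apply: sparse_restr; apply: leq_trans (card_pre_le _ _ _) _.
  by rewrite mulSn addnCA addnK.
set Sc := normqq q (restr (~: T) x).
set Ahq := normqq q (A *m h).
set t := norm2 g.
have Sc0 : 0 <= Sc by apply: normqq_ge0.
have Ahq0 : 0 <= Ahq by apply: normqq_ge0.
have t0 : 0 <= t by apply: norm2_ge0.
have sumP : \sum_(j < d) normqq q (restr (P j) x) = Sc.
  rewrite /normqq exchange_big /=; apply: eq_bigr => i _.
  rewrite (@blocks_entry0 _ _ sigma s a x i (fun y => `|y| `^ q)) ?normr0 ?powR0 ?gt_eqF //.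
  by rewrite mxE inE hT -leqNgt.
have cbnd : \sum_(j < d) norm2 (restr (P j.+1) x) `^ q <= a%:R `^ (q / 2 - 1) * Sc.
  rewrite -sumP mulr_sumr; apply: ler_sum => j _; exact: block_bound.
have FA : (1 - delta_sa) * t `^ q <= Ahq + (1 + delta_a) * L `^ (- (q / 2)) * (a%:R `^ (q / 2 - 1) * Sc).
  have [lo _] := ripS u spu.
  apply: le_trans lo _.
  rewrite AhE; apply: le_trans (normqqD _ _ q0 q1) _; rewrite normqqN.
  apply: lerD => //; apply: le_trans (normqq_sum _ q0 q1) _.
  apply: (@le_trans _ _ (\sum_(j < d) (1 + delta_a) * L `^ (- (q / 2)) * norm2 (restr (P j.+1) x) `^ q)).
    apply: ler_sum => j _; have [_ hi] := ripA _ (spj j); apply: le_trans hi _.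
    rewrite -mulrA; apply: ler_wpM2l; first exact: dA1p.
    exact: pinv_powR.
  rewrite -mulr_sumr; apply: ler_wpM2l => //.
  by apply: mulr_ge0; [exact: dA1p|apply: powR_ge0].
set V := a%:R `^ (q / 2 - 1) * (Sc + L `^ (q / 2) * a%:R `^ (1 - q / 2) * Ahq / (1 + delta_a)).
have V0 : 0 <= V.
  apply: mulr_ge0; first exact: powR_ge0.
  apply: addr_ge0 => //; apply: divr_ge0; last exact: dA1p.
  by apply: mulr_ge0; [apply: mulr_ge0|]; apply: powR_ge0 || done.
have k1 : 1 <= kappa by rewrite /kappa ler_pdivlMr // mul1r.
have Dp : 0 < Delta by rewrite /Delta divr_gt0.
rewrite -mulrA; apply: final_ineq => //; first exact: norm2_ge0.
set W := V `^ q^-1; set Dl := Delta `^ q^-1; set X := norm2 u.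
have W0 : 0 <= W by apply: powR_ge0.
have Dl0 : 0 <= Dl by apply: powR_ge0.
have X0 : 0 <= X by apply: norm2_ge0.
have WV : W `^ q = V by rewrite powR_invK // gt_eqF.
have DlD : Dl `^ q = Delta by rewrite powR_invK ?gt_eqF // ltW.
set Nw := norm2 wv.
have Nw0 : 0 <= Nw by apply: norm2_ge0.
have NwW : Nw <= W.
  apply: (powR_le_inv q0 Nw0 W0); rewrite WV.
  have -> : Nw `^ q = (\sum_(j < d) norm2 (restr (P j.+1) x) ^+ 2) `^ (q / 2).
    rewrite -(sq_powR q Nw0) norm2_sq; congr (_ `^ _).
    transitivity (\sum_i \sum_(j < d) (restr (P j.+1) x i 0) ^+ 2).
      apply: eq_bigr => i _.
      by rewrite wvE (@blocks_entry _ _ sigma s a x i (fun y => y ^+ 2)) ?expr0n.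
    by rewrite exchange_big /=; apply: eq_bigr => j _; rewrite norm2_sq.
  apply: le_trans (powR_sum_subadd _ _ p2 p21 (fun j => sqr_ge0 _)) _.
  under eq_bigr => j _ do rewrite sq_powR ?norm2_ge0 //.
  apply: le_trans cbnd _; apply: ler_wpM2l; first exact: powR_ge0.
  rewrite lerDl; apply: divr_ge0; last exact: dA1p.
  by apply: mulr_ge0; [apply: mulr_ge0|]; apply: powR_ge0 || done.
set Y := norm2 (D^T *m g); set Nx := norm2 x.
have Y0 : 0 <= Y by apply: norm2_ge0.
have Nx0 : 0 <= Nx by apply: norm2_ge0.
have X2 : X ^+ 2 <= Y * Nx.
  have -> : X ^+ 2 = dotv x u.
    rewrite /X norm2_sq /dotv; apply: eq_bigr => i _; rewrite uE.
    by case: ifP; rewrite ?expr2 ?mulr0 // expr0n.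
  rewrite xdef (key_dot h u L0 fr) -xdef; exact: CS.
have Nx2 : Nx ^+ 2 = X ^+ 2 + Nw ^+ 2.
  rewrite /Nx /X /Nw !norm2_sq -big_split /=; apply: eq_bigr => i _.
  rewrite uE wvE {1}xdec mxE uE wvE.
  by case: ltnP => _; rewrite ?expr0n ?addr0 ?add0r.
have Y2 : Y ^+ 2 <= U * t ^+ 2 by have [_ hh] := fr g.
have Lt : L * t ^+ 2 <= Dl ^+ 2 * W ^+ 2.
  apply: (powR_le_inv p2); first by apply: mulr_ge0; [exact: ltW L0|apply: sqr_ge0].
    by apply: mulr_ge0; apply: sqr_ge0.
  rewrite (powRM _ (ltW L0) (sqr_ge0 t)) (powRM _ (sqr_ge0 _) (sqr_ge0 _)).
  rewrite !sq_powR // DlD WV.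
  set lq := L `^ (q / 2).
  have lqp : 0 < lq by apply: powR_gt0.
  have eLN : L `^ (- (q / 2)) = lq^-1 by rewrite powRN.
  have ea : a%:R `^ (q / 2 - 1) = (a%:R `^ (1 - q / 2))^-1 by rewrite -powRN opprB.
  rewrite eLN ea in FA; rewrite /V ea /Delta.
  set ai := a%:R `^ (1 - q / 2) in FA *.
  have aip : 0 < ai by apply: powR_gt0.
  set tq := t `^ q in FA *.
  have E : (1 + delta_a) / (1 - delta_sa) * (ai^-1 * (Sc + lq * ai * Ahq / (1 + delta_a)))
     = (lq * (Ahq + (1 + delta_a) * lq^-1 * (ai^-1 * Sc))) / (1 - delta_sa).
    have n1 : 1 + delta_a != 0 by rewrite gt_eqF.
    have n2 : 1 - delta_sa != 0 by rewrite gt_eqF.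
    have n3 : lq != 0 by rewrite gt_eqF.
    have n4 : ai != 0 by rewrite gt_eqF.
    by field; rewrite ?n1 ?n2 ?n3 ?n4.
  rewrite E ler_pdivlMr; last exact: dS1p.
  have hh := ler_wpM2l (ltW lqp) FA.
  by apply: (le_trans _ hh); rewrite le_eqVlt; apply/orP; left; apply/eqP; ring.
have eU : U = kappa * L by rewrite /kappa divfK // gt_eqF.
have Y2' : Y ^+ 2 <= kappa * Dl ^+ 2 * W ^+ 2.
  apply: le_trans Y2 _; rewrite eU -mulrA -mulrA; apply: ler_wpM2l; first exact: (le_trans ler01 k1).
  exact: Lt.
have Nx2' : Nx ^+ 2 <= X ^+ 2 + W ^+ 2.
  by rewrite Nx2 lerD2l !expr2; apply: ler_pM.
have H4 : X ^+ 4 <= Y ^+ 2 * Nx ^+ 2.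
  rewrite (_ : X ^+ 4 = (X ^+ 2) ^+ 2); last by rewrite -exprM.
  have X2' := X2; rewrite expr2 in X2'.
  rewrite -exprMn !expr2; apply: ler_pM => //; exact: mulr_ge0.
apply: le_trans H4 _.
apply: le_trans (ler_pM (sqr_ge0 _) (sqr_ge0 _) Y2' Nx2') _.
by rewrite le_eqVlt; apply/orP; left; apply/eqP; ring.
Qed.
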